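(* Let $p$ be a prime number. Define integers $x_0,\ldots,x_{4p-1}$ by $x_k=kp+\left(\tfrac{k(k+1)}{2}\bmod p\right)$ and $x_{k+2p}=x_k+p$ for $k=0,\ldots,2p-1$. Then $\{x_i-x_j\mid i,j=0,\ldots,4p-1\}\supseteq\{x\in\mathbb{Z}\mid |x|<p^2\}$.
   Context: $a\bmod p$ denotes the remainder of $a$ in $\{0,\ldots,p-1\}$. *)

(* Defs.v *)
From Stdlib Require Import ZArith Znumtheory.
Open Scope Z_scope.

Definition xbase (p k : Z) : Z := k * p + (k * (k + 1) / 2) mod p.

Definition xseq (p k : Z) : Z :=
  if k <? 2 * p then xbase p k else xbase p (k - 2 * p) + p.

(* Main.v *)
Require Import Defs.
From Stdlib Require Import ZArith Znumtheory Lia.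
Open Scope Z_scope.

Definition tri (k : Z) := k * (k + 1) / 2.

Lemma tri_add j d : tri (j + d) = tri j + d * j + tri d.
Proof.
  unfold tri.
  assert (Ev : forall k, exists q, k * (k + 1) = 2 * q).
  { intro k; destruct (Z.Even_or_Odd k) as [[m ->]|[m ->]].
    - exists (m * (2*m+1)); ring.
    - exists ((2*m+1)*(m+1)); ring. }
  destruct (Ev j) as [q1 E1]; destruct (Ev d) as [q2 E2].
  replace ((j + d) * (j + d + 1)) with (2 * (q1 + q2 + d * j)) by nia.
  rewrite E1, E2, !(Z.mul_comm 2), !Z.div_mul by lia. ring.
Qed.

Lemma xseq_lo p k : 0 <= k < 2 * p -> xseq p k = xbase p k.
Proof. intro H; unfold xseq; rewrite (proj2 (Z.ltb_lt _ _)) by lia; reflexivity. Qed.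

Lemma xseq_hi p k : 0 <= k < 2 * p -> xseq p (k + 2 * p) = xbase p k + p.
Proof.
  intro H; unfold xseq; rewrite (proj2 (Z.ltb_ge _ _)) by lia.
  replace (k + 2 * p - 2 * p) with k by ring; reflexivity.
Qed.

Lemma step p (hp : prime p) d (hd : 1 <= d < p) a b (ha : a = d \/ a = d - 1)
  (hb : 0 <= b < p) :
  exists i j, 0 <= i < 4 * p /\ 0 <= j < 4 * p /\ a * p + b = xseq p i - xseq p j.
Proof.
  assert (Hrp : rel_prime d p) by (apply rel_prime_le_prime; auto; lia).
  destruct (rel_prime_bezout _ _ Hrp) as [u v E5].
  assert (Hp2 := prime_ge_2 p hp).
  set (c := b - tri d).
  set (j := (u * c) mod p).
  assert (Hj : 0 <= j < p) by (apply Z.mod_pos_bound; lia).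
  set (i := j + d).
  assert (E1 : tri i = tri j + d * j + tri d) by apply tri_add.
  assert (E4 : u * c = p * ((u*c)/p) + j) by (apply Z.div_mod; lia).
  assert (E2 : tri i = p * (tri i / p) + tri i mod p) by (apply Z.div_mod; lia).
  assert (E3 : tri j = p * (tri j / p) + tri j mod p) by (apply Z.div_mod; lia).
  assert (Ri : 0 <= tri i mod p < p) by (apply Z.mod_pos_bound; lia).
  assert (Rj : 0 <= tri j mod p < p) by (apply Z.mod_pos_bound; lia).
  set (ri := tri i mod p) in *. set (rj := tri j mod p) in *.
  set (qi := tri i / p) in *. set (qj := tri j / p) in *.
  set (qc := (u*c)/p) in *.
  assert (H1 : d * (u * c) = d * (p * qc + j)) by (rewrite E4; reflexivity).
  assert (H2 : c * (u * d + v * p) = c) by (rewrite E5; ring).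
  assert (K : ri - rj - b = p * (qj - qi - c * v - d * qc)).
  { unfold c in *. nia. }
  set (k := qj - qi - c * v - d * qc) in *.
  assert (Kc : k = 0 \/ k = -1).
  { assert (p * k < p * 1) by lia. assert (p * (-2) < p * k) by lia.
    assert (k < 1) by (eapply Z.mul_lt_mono_pos_l; [|eassumption]; lia).
    assert (-2 < k) by (eapply Z.mul_lt_mono_pos_l; [|eassumption]; lia).
    lia. }
  assert (Xd : xbase p i - xbase p j = d * p + (ri - rj)).
  { unfold xbase; fold (tri i) (tri j); unfold ri, rj, i; ring. }
  assert (Hi : 0 <= i < 2 * p) by (unfold i; lia).
  assert (Hj2 : 0 <= j < 2 * p) by lia.
  destruct Kc as [Kc|Kc]; rewrite Kc in K; destruct ha as [ha|ha]; subst a.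
  - exists i, j; rewrite !xseq_lo by lia; repeat split; lia.
  - exists i, (j + 2 * p); rewrite xseq_hi, xseq_lo by lia; repeat split; lia.
  - exists (i + 2 * p), j; rewrite xseq_hi, xseq_lo by lia; repeat split; lia.
  - exists i, j; rewrite !xseq_lo by lia; repeat split; lia.
Qed.

Lemma pos_case p (hp : prime p) x : 0 <= x < p ^ 2 ->
  exists i j : Z, 0 <= i < 4 * p /\ 0 <= j < 4 * p /\ x = xseq p i - xseq p j.
Proof.
  intro Hx. assert (H2 := prime_ge_2 p hp).
  assert (Ex : x = (x / p) * p + x mod p) by (rewrite Z.mul_comm; apply Z.div_mod; lia).
  assert (Hb : 0 <= x mod p < p) by (apply Z.mod_pos_bound; lia).
  assert (Ha : 0 <= x / p < p).
  { split. apply Z.div_pos; lia. apply Z.div_lt_upper_bound; nia. }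
  rewrite Ex.
  destruct (Z.eq_dec (x / p) 0) as [E|E].
  - apply (step p hp 1); lia.
  - apply (step p hp (x / p)); lia.
Qed.

Theorem theorem8 (p : Z) (hp : prime p) :
  forall x : Z, Z.abs x < p ^ 2 ->
    exists i j : Z, 0 <= i < 4 * p /\ 0 <= j < 4 * p /\ x = xseq p i - xseq p j.
Proof.
  intros x Hx.
  destruct (Z_le_gt_dec 0 x).
  - apply pos_case; auto; lia.
  - destruct (pos_case p hp (- x)) as [i [j [Hi [Hj E]]]]; [lia|].
    exists j, i; repeat split; lia.
Qed.
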